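(* For all $n\ge0$ and complex parameters, with the convention $E_{n,k}=0$ if $k<0$, $k>n$ or $n<0$: (i) $E_{n,k}(a,b;c_0+a,c_\infty-a)=E_{n,k}+an\,(E_{n-1,k}-E_{n-1,k-1})$, where every number on the right has parameters $(a,b;c_0,c_\infty)$, for $0\le k\le n$; (ii) $E_{n,k}(a,b;c_0+b,-c_0)=E_{n,k+1}(a,b;c_0,b-c_0)+(-1)^k(c_0)^{\underline n,a}\binom{n+1}{k+1}$ for $-1\le k\le n$; (iii) $c_\infty\,E_{n,k}(a,b;b-a,c_\infty+a)=E_{n+1,k+1}(a,b;0,c_\infty)$ for $-1\le k\le n$; (iv) $c_0\,E_{n,k}(a,b;c_0-a,a+b)=E_{n+1,k}(a,b;c_0,0)$ for $0\le k\le n$; (v) $c\,[E_{n,k+1}(a,b;c-a,a-c)-E_{n,k}(a,b;c-a,a-c)]=E_{n+1,k+1}(a,b;c,-c)$ for $-1\le k\le n$.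
   Context: Generalized Eulerian numbers $E_{n,k}(a,b;c_0,c_\infty)$: defined by $E_{0,0}=1$, $E_{n,k}=0$ if $n<0$, $k<0$ or $k>n$, and $E_{n+1,k+1}=[-an+b(k+1)+c_0]E_{n,k+1}+[(a+b)n-bk+c_\infty]E_{n,k}$ for $n\ge0$, $k\in\mathbb Z$. $(x)^{\underline n,a}=\prod_{i=0}^{n-1}(x-ia)$. *)

(* Defs.v *)
From HB Require Import structures.
From mathcomp Require Import all_boot all_order all_algebra.
From mathcomp Require Import complex.
From mathcomp Require Import reals.
Set Implicit Arguments. Unset Strict Implicit. Unset Printing Implicit Defensive.
Import Order.TTheory GRing.Theory Num.Theory.
Local Open Scope ring_scope.

(* E_{0,k} = [k = 0]; E_{n+1,k} = (-a n + b k + c0) E_{n,k}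
                                 + ((a+b) n - b (k-1) + cinf) E_{n,k-1},
   which is the recursion of the paper with k+1 renamed k; the values with
   k < 0 or k > n are 0 (this follows from the recursion). *)
Fixpoint genEuler (F : ringType) (a b c0 cinf : F) (n : nat) (k : int) : F :=
  match n with
  | 0 => if k == 0 then 1 else 0
  | m.+1 => (- a * m%:R + b * k%:~R + c0) * genEuler a b c0 cinf m k
            + ((a + b) * m%:R - b * (k - 1)%:~R + cinf)
              * genEuler a b c0 cinf m (k - 1)
  end.

Definition gfall (F : ringType) (x a : F) (n : nat) : F :=
  \prod_(i < n) (x - i%:R * a).

(* Main.v *)
Require Import Defs.
From HB Require Import structures.
From mathcomp Require Import all_boot all_order all_algebra ring.
From mathcomp Require Import complex.
From mathcomp Require Import reals.
Import Order.TTheory GRing.Theory Num.Theory.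
Local Open Scope ring_scope.

Section S.
Variable F : comRingType.
Implicit Types a b c ci : F.

Lemma gES a b (c0 : F) ci n k : genEuler a b (c0 : F) ci n.+1 k =
  (- a * n%:R + b * k%:~R + c0) * genEuler a b (c0 : F) ci n k
  + ((a + b) * n%:R - b * (k - 1)%:~R + ci) * genEuler a b (c0 : F) ci n (k - 1).
Proof. by []. Qed.

Lemma gE0 a b (c0 : F) ci k : genEuler a b (c0 : F) ci 0 k = (k == 0)%:R.
Proof. by rewrite /=; case: eqP. Qed.

Lemma gEneg a b (c0 : F) ci n k : k < 0 -> genEuler a b (c0 : F) ci n k = 0.
Proof.
elim: n k => [|n IH] k kl.
  by rewrite gE0; move: kl; case: eqP => [->|]; rewrite ?ltxx.
rewrite gES !IH ?mulr0 ?addr0 //.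
by rewrite (lt_trans _ kl) // gtrDl ltrN10.
Qed.

Lemma p4 a b (c0 : F) n k : (c0 : F) * genEuler a b (c0 - a) (a + b) n k = genEuler a b (c0 : F) 0 n.+1 k.
Proof.
elim: n k => [|n IH] k.
  rewrite gES !gE0 subr_eq0; have [->|k0] := eqVneq k 0; first by rewrite /=; ring.
  have [->|k1] := eqVneq k 1; last by rewrite !mulr0 addr0.
  rewrite /=; ring.
rewrite [genEuler _ _ _ _ n.+2 _]gES -!IH [genEuler _ _ _ _ n.+1 _]gES; ring.
Qed.


Lemma p3 a b ci n k : ci * genEuler a b (b - a) (ci + a) n k = genEuler a b 0 ci n.+1 (k + 1).
Proof.
elim: n k => [|n IH] k.
  rewrite gES !gE0 addrK; have [->|k0] := eqVneq k 0; first by rewrite /=; ring.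
  by have [->|k1] := eqVneq (k + 1) 0; rewrite /=; ring.
rewrite [genEuler _ _ _ _ n.+2 _]gES addrK -IH.
have := IH (k - 1); rewrite subrK => <-.
rewrite [genEuler _ _ _ _ n.+1 _]gES; ring.
Qed.

Lemma p5 a b c n k : c * (genEuler a b (c - a) (a - c) n (k + 1) - genEuler a b (c - a) (a - c) n k)
  = genEuler a b c (- c) n.+1 (k + 1).
Proof.
elim: n k => [|n IH] k.
  rewrite gES !gE0 addrK; have [->|k0] := eqVneq k 0; first by rewrite /=; ring.
  have [->|k1] := eqVneq (k + 1) 0; last by rewrite !mulr0 subrr mulr0 addr0.
  rewrite /=; ring.
rewrite [genEuler _ _ _ _ n.+2 _]gES addrK -IH.
have := IH (k - 1); rewrite subrK => <-.
rewrite !gES addrK; ring.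
Qed.

Lemma p1 a b (c0 : F) ci n k : genEuler a b (c0 + a) (ci - a) n k
  = genEuler a b c0 ci n k + a * n%:R * (genEuler a b c0 ci n.-1 k - genEuler a b c0 ci n.-1 (k - 1)).
Proof.
elim: n k => [|n IH] k.
  by rewrite !gE0 mulr0 mul0r addr0.
rewrite [genEuler _ _ (c0 + a) _ _ _]gES !IH [genEuler _ _ c0 ci n.+1 k]gES.
case: n {IH} => [|m] /=; first ring.
ring.
Qed.

End S.

Section T.
Variable F : fieldType.

Lemma sgn1 (k : int) : exprz (-1 : F) (k - 1) = - exprz (-1) k.
Proof. by rewrite expfzDr ?oppr_eq0 ?oner_eq0 // exprN1 invrN1 mulrN1. Qed.

Lemma predz (j : nat) : (j.+1%:Z - 1 = j%:Z)%R.
Proof. by rewrite -addn1 PoszD addrK. Qed.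

Lemma gfallS (c0 a : F) n : gfall c0 a n.+1 = gfall c0 a n * (c0 - n%:R * a).
Proof. by rewrite /gfall big_ord_recr. Qed.

Lemma p2 a b (c0 : F) n (j : nat) :
  genEuler a b (c0 + b) (- c0) n (j%:Z - 1)
  = genEuler a b c0 (b - c0) n j%:Z + exprz (-1) (j%:Z - 1) * gfall c0 a n * ('C(n.+1, j))%:R.
Proof.
elim: n j => [|n IH] j.
  rewrite !gE0 /gfall big_ord0 mulr1.
  case: j => [|[|j]].
  - by rewrite sgn1 expr0z /= bin0 mulr1 subrr.
  - by rewrite subrr expr0z binn add0r mul1r.
  - by rewrite /= bin_small // mulr0 addr0.
rewrite [genEuler _ _ (c0 + b) _ _ _]gES [genEuler _ _ c0 _ _ _]gES gfallS.
case: j IH => [|j] IH.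
  have h1 : (0%:Z - 1 - 1) < 0 by [].
  have h2 : (0%:Z - 1) < 0 by [].
  rewrite (gEneg _ _ _ _ _ _ _ h1) (gEneg _ _ _ _ _ _ _ h2).
  have e := IH 0%N; rewrite (gEneg _ _ _ _ _ _ _ h2) in e; rewrite (gEneg _ _ _ _ _ _ _ h2).
  move/eqP: e; rewrite eq_sym addr_eq0 => /eqP ->.
  rewrite sgn1 expr0z !bin0; ring.
rewrite !predz.
have e1 := IH j.+1; rewrite !predz in e1; rewrite e1 IH sgn1.
have hn : (j.+1 * 'C(n.+1, j.+1) + j.+1 * 'C(n.+1, j) = n.+2 * 'C(n.+1, j))%N.
  by rewrite -mulnDr -binS mul_bin_diag.
have hR : (j.+1%:R * ('C(n.+1,j.+1))%:R + j.+1%:R * ('C(n.+1,j))%:R = n.+2%:R * ('C(n.+1,j))%:R :> F) by rewrite -!natrM -natrD hn.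
rewrite (binS n.+1 j) natrD.
apply/eqP; rewrite -subr_eq0; apply/eqP.
transitivity (exprz (-1) j%:Z * gfall c0 a n * b *
  (j.+1%:R * ('C(n.+1, j.+1))%:R + j.+1%:R * ('C(n.+1, j))%:R - n.+2%:R * ('C(n.+1, j))%:R)); first ring.
by rewrite hR subrr mulr0.
Qed.

End T.
Theorem mainTheorem16 (R : realType) (a b c0 cinf c : complex R) (n : nat) :
  (* (i) *)
  (forall k : int, 0 <= k <= n%:Z ->
     genEuler a b (c0 + a) (cinf - a) n k
     = genEuler a b c0 cinf n k
       + a * n%:R * (genEuler a b c0 cinf n.-1 k
                     - genEuler a b c0 cinf n.-1 (k - 1))) /\
  (* (ii) *)
  (forall k : int, -1 <= k <= n%:Z ->
     genEuler a b (c0 + b) (- c0) n k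
     = genEuler a b c0 (b - c0) n (k + 1)
       + exprz (-1) k * gfall c0 a n * ('C(n.+1, absz (k + 1)))%:R) /\
  (* (iii) *)
  (forall k : int, -1 <= k <= n%:Z ->
     cinf * genEuler a b (b - a) (cinf + a) n k
     = genEuler a b 0 cinf n.+1 (k + 1)) /\
  (* (iv) *)
  (forall k : int, 0 <= k <= n%:Z ->
     c0 * genEuler a b (c0 - a) (a + b) n k
     = genEuler a b c0 0 n.+1 k) /\
  (* (v) *)
  (forall k : int, -1 <= k <= n%:Z ->
     c * (genEuler a b (c - a) (a - c) n (k + 1)
          - genEuler a b (c - a) (a - c) n k)
     = genEuler a b c (- c) n.+1 (k + 1)).
Proof.
split; [|split; [|split; [|split]]].
- by move=> k _; exact: p1.
- move=> k /andP[k1 _].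
  have [j ej] : exists j : nat, (k + 1)%R = Posz j.
    by exists (absz (k + 1)); rewrite gez0_abs // -lerBlDr sub0r.
  have -> : k = j%:Z - 1 by rewrite -ej addrK.
  rewrite subrK /=; exact: p2.
- by move=> k _; exact: p3.
- by move=> k _; exact: p4.
- by move=> k _; exact: p5.
Qed.
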